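(* Let $V=\{1,\dots,n\}$ be partitioned into $P_1,\dots,P_J$. For each realization $z$ let $r_{i,z}\in[0,1]$, $i\in V$, with $\sum_{i}r_{i,z}=1$, and let $f_z(\mathbf{x})=\sum_{j=1}^J h\big(\sum_{i\in P_j}r_{i,z}x_i\big)$ for $\mathbf{x}\in\{0,1\}^n$, with $h(s)=\log(1+s)$. Let $\hat h^L(s)=\sum_{\ell=0}^L\frac{h^{(\ell)}(1/2)}{\ell!}(s-1/2)^\ell$ and $\hat f_z^L(\mathbf{x})=\sum_{j=1}^J\hat h^L\big(\sum_{i\in P_j}r_{i,z}x_i\big)$. Let $G_z$ be the multilinear relaxation of $f_z$ and $\widehat{\nabla G_z^L}$ the polynomial estimator built from $\hat f_z^L$. Then for all $\mathbf{y}\in[0,1]^n$, $$\big\|\nabla G_z(\mathbf{y})-\widehat{\nabla G_z^L}(\mathbf{y})\big\|_2\le\frac{\sqrt n}{(L+1)2^L}.$$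
   Context: $G_z(\mathbf{y})=\mathbb{E}_{\mathbf{x}\sim\mathbf{y}}[f_z(\mathbf{x})]$ where $\mathbf{x}\sim\mathbf{y}$ has independent Bernoulli$(y_i)$ coordinates. For a polynomial $p(\mathbf{y})=c_0+\sum_\ell c_\ell\prod_{i\in J_\ell}y_i^{k_i^\ell}$ ($k_i^\ell\ge1$), its multilinearization is $\dot p(\mathbf{y})=c_0+\sum_\ell c_\ell\prod_{i\in J_\ell}y_i$. The polynomial estimator is $\big(\widehat{\nabla G_z^L}(\mathbf{y})\big)_i=\dot{\hat f}{}_z^L([\mathbf{y}]_{+i})-\dot{\hat f}{}_z^L([\mathbf{y}]_{-i})$, where $[\mathbf{y}]_{+i}$, $[\mathbf{y}]_{-i}$ denote $\mathbf{y}$ with coordinate $i$ set to $1$, $0$. *)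

(* Defs.v *)
From HB Require Import structures.
From mathcomp Require Import all_boot all_order all_algebra.
From mathcomp Require Import mpoly.
From mathcomp Require Import all_classical all_reals all_analysis.
Set Implicit Arguments. Unset Strict Implicit. Unset Printing Implicit Defensive.
Import Order.TTheory GRing.Theory Num.Theory.
Import numFieldNormedType.Exports.
Local Open Scope ring_scope.

Section Defs.
Variable R : realType.

Definition h (s : R) : R := ln (1 + s).

Definition hcoef (l : nat) : R := derive1n l h (2^-1) / (l`!)%:R.

Definition hhat (L : nat) (s : R) : R :=
  \sum_(l < L.+1) hcoef l * (s - 2^-1) ^+ l.

Variables (n J : nat).
(* the partition V = P_1 ∪ ... ∪ P_J is given by the block map blk : i |-> j with i ∈ P_j *)
Variable blk : 'I_n -> 'I_J.
(* weights r_{i,z} for the fixed realization z *)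
Variable r : 'I_n -> R.

Definition fz (x : {ffun 'I_n -> bool}) : R :=
  \sum_(j < J) h (\sum_(i < n | blk i == j) r i * (x i)%:R).

(* multilinear relaxation G_z(y) = E_{x ~ y}[f_z(x)], x_i ~ Bernoulli(y_i) independent *)
Definition Gz (y : 'rV[R]_n) : R :=
  \sum_(x : {ffun 'I_n -> bool})
     (\prod_(i < n) (if x i then y 0 i else 1 - y 0 i)) * fz x.

Definition gradGz (y : 'rV[R]_n) (i : 'I_n) : R := derive Gz y (delta_mx 0 i).

Definition fhat_poly (L : nat) : mpoly.mpoly n R :=
  \sum_(j < J) \sum_(l < L.+1)
     hcoef l *: (\sum_(i < n | blk i == j) r i *: mpoly.mpolyX R (mpoly.mnm1 i)
                 - mpoly.mpolyC n (2^-1)) ^+ l.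

Definition mlin_mnm (m : mpoly.multinom n) : mpoly.multinom n :=
  mpoly.Multinom [tuple minn (mpoly.fun_of_multinom m i) 1 | i < n].

Definition multilinearize (p : mpoly.mpoly n R) : mpoly.mpoly n R :=
  \sum_(m <- mpoly.msupp p) mpoly.mcoeff m p *: mpoly.mpolyX R (mlin_mnm m).

Definition set_coord (y : 'rV[R]_n) (i : 'I_n) (b : R) : 'I_n -> R :=
  fun k => if k == i then b else y 0 k.

Definition gradGz_hat (L : nat) (y : 'rV[R]_n) (i : 'I_n) : R :=
  mpoly.meval (set_coord y i 1) (multilinearize (fhat_poly L))
  - mpoly.meval (set_coord y i 0) (multilinearize (fhat_poly L)).

End Defs.

(* Main.v *)
Require Import Defs.
From HB Require Import structures.
From mathcomp Require Import all_boot all_order all_algebra.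
From mathcomp Require Import mpoly.
From mathcomp Require Import all_classical all_reals all_analysis.
From mathcomp Require Import ring lra.
Import Order.TTheory GRing.Theory Num.Theory.
Import numFieldNormedType.Exports.
Local Open Scope classical_set_scope.
Local Open Scope ring_scope.
Set Implicit Arguments. Unset Strict Implicit.

Section Alg.
Variable R : realType.
Variable n : nat.

Definition W (y : 'I_n -> R) (x : {ffun 'I_n -> bool}) : R :=
  \prod_(k < n) (if x k then y k else 1 - y k).
Definition E (y : 'I_n -> R) (F : {ffun 'I_n -> bool} -> R) : R :=
  \sum_(x : {ffun 'I_n -> bool}) W y x * F x.
Definition upd (y : 'I_n -> R) (i : 'I_n) (b : R) : 'I_n -> R :=
  fun k => if k == i then b else y k.

Lemma W_split y i x : W y x =
  (if x i then y i else 1 - y i) * \prod_(k < n | k != i) (if x k then y k else 1 - y k).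
Proof. by rewrite /W (bigD1 i). Qed.

Lemma E_split y i F : E y F = y i * E (upd y i 1) F + (1 - y i) * E (upd y i 0) F.
Proof.
rewrite /E !mulr_sumr -big_split /=; apply: eq_bigr => x _.
rewrite !(W_split _ i) /upd eqxx.
have -> : \prod_(k < n | k != i) (if x k then (if k == i then 1 else y k) else 1 - (if k == i then 1 else y k))
  = \prod_(k < n | k != i) (if x k then y k else 1 - y k).
  by apply: eq_bigr => k /negbTE ->.
have -> : \prod_(k < n | k != i) (if x k then (if k == i then 0 else y k) else 1 - (if k == i then 0 else y k))
  = \prod_(k < n | k != i) (if x k then y k else 1 - y k).
  by apply: eq_bigr => k /negbTE ->.
by case: (x i); ring.
Qed.

Lemma E_mono y (m : 'I_n -> nat) :
  \sum_(x : {ffun 'I_n -> bool}) W y x * \prod_(k < n) ((x k)%:R) ^+ (m k)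
  = \prod_(k < n) y k ^+ minn (m k) 1.
Proof.
have -> : \prod_(k < n) y k ^+ minn (m k) 1 =
   \prod_(k < n) \sum_(b : bool) (if b then y k else 1 - y k) * (b%:R) ^+ (m k).
  apply: eq_bigr => k _; rewrite big_bool /=.
  case: (m k) => [|mk]; first by rewrite !expr0; ring.
  by rewrite expr0n /= mulr0 addr0 expr1n mulr1 expr1.
rewrite bigA_distr_bigA /=; apply: eq_bigr => x _.
by rewrite /W -big_split.
Qed.
End Alg.

Section Alg2.
Variable R : realType.
Variable n : nat.

Definition xv (x : {ffun 'I_n -> bool}) : 'I_n -> R := fun k => (x k)%:R.

Lemma meval_ml (p : {mpoly R[n]}) y :
  meval y (multilinearize p) = E y (fun x => meval (xv x) p).
Proof.
rewrite /multilinearize raddf_sum /E /=.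
under eq_bigr do rewrite mevalZ mevalX.
under [RHS]eq_bigr do rewrite mevalE mulr_sumr.
rewrite exchange_big /=; apply: eq_bigr => m _.
under [RHS]eq_bigr do rewrite mulrCA.
rewrite -mulr_sumr; congr (_ * _).
rewrite E_mono; apply: eq_bigr => k _.
by rewrite /mlin_mnm mnmE.
Qed.
End Alg2.
Arguments xv {R n} x.

Section Alg3.
Variable R : realType.
Variables (n J : nat) (blk : 'I_n -> 'I_J) (r : 'I_n -> R).

Definition S (j : 'I_J) (x : {ffun 'I_n -> bool}) : R :=
  \sum_(i < n | blk i == j) r i * (x i)%:R.

Lemma fhat_eval (L : nat) (x : {ffun 'I_n -> bool}) :
  meval (xv x) (fhat_poly blk r L) = \sum_(j < J) hhat L (S j x).
Proof.
rewrite /fhat_poly raddf_sum /=; apply: eq_bigr => j _.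
rewrite raddf_sum /=; apply: eq_bigr => l _.
rewrite mevalZ rmorphXn /= mevalB mevalC raddf_sum /=; congr (_ * (_ - _) ^+ _).
apply: eq_bigr => i _; by rewrite mevalZ mevalXU.
Qed.
End Alg3.

Section Calc.
Variable R : realType.

Lemma isd_affine (x a : R) : is_derive x 1 (fun s : R => s + a) 1.
Proof. exact: is_derive_shift. Qed.

Lemma isd_1p (x : R) : is_derive x 1 (fun s : R => 1 + s) 1.
Proof.
have -> : (fun s : R => 1 + s) = (fun s => s + 1) by apply/funext => s; rewrite addrC.
exact: is_derive_shift.
Qed.

Lemma isd_pow (x a : R) (k : nat) :
  is_derive x 1 (fun s : R => (s + a) ^+ k) (k%:R * (x + a) ^+ k.-1).
Proof.
have H := is_deriveX k (isd_affine x a).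
rewrite exprfctE /= in H.
by apply: is_derive_eq H _; rewrite /GRing.scale /= mulr1.
Qed.

Lemma isd_h (x : R) : -1 < x -> is_derive x 1 (@h R) (1 + x)^-1.
Proof.
move=> hx.
have hp : 0 < 1 + x by rewrite -ltrBlDl sub0r.
have H := is_derive1_comp (is_derive1_ln hp) (isd_1p x).
by rewrite mulr1 in H.
Qed.

Lemma isd_inv (x c : R) (k : nat) : -1 < x ->
  is_derive x 1 (fun s : R => c * ((1 + s) ^+ k.+1)^-1)
     (c * (- (k.+1)%:R / (1 + x) ^+ k.+2)).
Proof.
move=> hx.
have hp : 0 < 1 + x by rewrite -ltrBlDl sub0r.
have H1 : is_derive x 1 (fun s : R => (1 + s) ^+ k.+1) ((k.+1)%:R * (1 + x) ^+ k).
  have := isd_pow x 1 k.+1.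
  have -> : (fun s : R => (s + 1) ^+ k.+1) = (fun s : R => (1 + s) ^+ k.+1).
    by apply/funext => s; rewrite addrC.
  by rewrite addrC.
have nz : (1 + x) ^+ k.+1 != 0 by rewrite expf_neq0 // gt_eqF.
have H2 := @is_deriveV R (fun s => (1 + s) ^+ k.+1) x _ 1 nz H1.
have H3 := is_deriveZ c H2.
rewrite /= in H3.
apply: is_derive_eq H3 _.
rewrite /GRing.scale /=.
rewrite !exprS expr0 mulr1.
have hv : (1 + x) ^+ k != 0 by rewrite expf_neq0 // gt_eqF.
move: hv; set v := (1 + x) ^+ k => hv.
field. by rewrite hv gt_eqF.
Qed.

Lemma hder (l : nat) (x : R) : -1 < x ->
  derive1n l.+1 (@h R) x = ((-1) ^+ l * (l`!)%:R) * ((1 + x) ^+ l.+1)^-1.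
Proof.
elim: l x => [|l IH] x hx.
  rewrite derive1n1 derive1E; case: (isd_h hx) => _ ->.
  by rewrite expr0 mul1r mul1r expr1.
rewrite derive1nS derive1E.
have -> : derive (derive1n l.+1 (@h R) : R^o -> R^o) x 1 =
   derive ((fun s => ((-1) ^+ l * (l`!)%:R) * ((1 + s) ^+ l.+1)^-1) : R^o -> R^o) x 1.
  apply: (@near_eq_derive R R^o R^o); near=> s; apply: IH.
  near: s; exact: lt_nbhsr.
case: (isd_inv ((-1) ^+ l * (l`!)%:R) l hx) => _ ->.
rewrite factS natrM exprS.
have hp : 0 < 1 + x by rewrite -ltrBlDl sub0r.
rewrite [(-1) ^+ l.+1]exprS; ring.
Unshelve. all: end_near.
Qed.

Definition a0 : R := 1 + 2^-1.

Lemma a0_gt0 : 0 < a0. Proof. rewrite /a0; apply: addr_gt0 => //; by rewrite invr_gt0. Qed.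
Lemma a0_ge1 : 1 <= a0. Proof. rewrite /a0 lerDl; apply: ltW; by rewrite invr_gt0. Qed.

Lemma hcoef0 : hcoef R 0 = @h R (2^-1).
Proof. by rewrite /hcoef /= divr1. Qed.

Lemma hcoefS l : hcoef R l.+1 = (-1) ^+ l / (l.+1%:R * a0 ^+ l.+1).
Proof.
have hx : (-1 : R) < 2^-1 by apply: (@lt_trans _ _ 0) => //; by rewrite invr_gt0.
rewrite /hcoef hder //.
rewrite factS natrM.
have f0 : (l`!)%:R != (0:R) by rewrite pnatr_eq0 -lt0n fact_gt0.
have a0n : a0 ^+ l.+1 != 0 by rewrite expf_neq0 // gt_eqF // a0_gt0.
rewrite -/a0.
move: f0 a0n; set F := (l`!)%:R; set A := a0 ^+ l.+1 => f0 a0n.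
field. by rewrite f0 a0n nat1r pnatr_eq0.
Qed.

Definition e (L : nat) (s : R) : R := @h R s - hhat L s.

Lemma isd_cpow (x a c : R) (k : nat) :
  is_derive x 1 (fun s : R => c * (s + a) ^+ k) (c * (k%:R * (x + a) ^+ k.-1)).
Proof.
have H := is_deriveZ c (isd_pow x a k).
exact: H.
Qed.

Lemma hhatS (L : nat) (s : R) : hhat L.+1 s = hhat L s + hcoef R L.+1 * (s - 2^-1) ^+ L.+1.
Proof. by rewrite /hhat big_ord_recr. Qed.

Lemma isd_e (L : nat) (x : R) : -1 < x ->
  is_derive x 1 (e L) ((- (x - 2^-1)) ^+ L / (a0 ^+ L * (1 + x))).
Proof.
move=> hx.
have hp : 0 < 1 + x by rewrite -ltrBlDl sub0r.
elim: L => [|L IH].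
  have H := is_deriveB (isd_h hx) (is_derive_cst (hcoef R 0) x 1).
  have -> : e 0 = (@h R - cst (hcoef R 0)).
    by apply/funext => s; rewrite /e /hhat big_ord1 expr0 mulr1.
  apply: is_derive_eq H _.
  by rewrite subr0 !expr0 !mul1r.
have -> : e L.+1 = (e L - (fun s => hcoef R L.+1 * (s + - 2^-1) ^+ L.+1)).
  by apply/funext => s; rewrite /e hhatS /= opprD addrA.
have H := is_deriveB IH (isd_cpow x (- 2^-1) (hcoef R L.+1) L.+1).
apply: is_derive_eq H _.
rewrite hcoefS /= -/(x - 2^-1).
have e1 : 1 + x = a0 + (x - 2^-1) by rewrite /a0; ring.
rewrite e1 -/a0.
have an : a0 != 0 by rewrite gt_eqF // a0_gt0.
have aL : a0 ^+ L != 0 by rewrite expf_neq0.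
have hn : a0 + (x - 2^-1) != 0 by rewrite -e1 gt_eqF.
move: an aL hn; set t := x - 2^-1; set A := a0 ^+ L => an aL hn.
rewrite !exprS.
have -> : (- t) ^+ L = (-1) ^+ L * t ^+ L by rewrite -exprMn mulN1r.
move: hn; set T := t ^+ L; set u := (-1) ^+ L => hn.
rewrite -/A.
field. by rewrite an aL hn nat1r pnatr_eq0.
Qed.

Lemma half_gt0 : (0:R) < 2^-1. Proof. by rewrite invr_gt0. Qed.

Lemma bound_gen (f df : R -> R) (L : nat) :
  (forall x : R, -1 < x -> is_derive x 1 f (df x)) ->
  (forall x : R, 0 <= x <= 1 -> `|df x| <= `|x - 2^-1| ^+ L) ->
  f (2^-1) = 0 ->
  forall s, 0 <= s <= 1 -> f s <= `|s - 2^-1| ^+ L.+1 / L.+1%:R.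
Proof.
move=> Hd Hb f0 s /andP[s0 s1].
have Ln : (L.+1%:R : R) != 0 by rewrite pnatr_eq0.
have h2 := half_gt0.
case: (lerP (2^-1) s) => hs.
- pose c : R := L.+1%:R^-1.
  pose phi : R -> R := f - (fun u => c * (u + - 2^-1) ^+ L.+1).
  have phiE : forall u, phi u = f u - c * (u - 2^-1) ^+ L.+1 by [].
  have dphi : forall x : R, -1 < x ->
      is_derive x 1 phi (df x - c * (L.+1%:R * (x + - 2^-1) ^+ L)).
    move=> x hx; exact: is_deriveB (Hd x hx) (isd_cpow x _ c L.+1).
  have gt1 : forall x : R, x \in `[2^-1, s] -> -1 < x.
    move=> x; rewrite in_itv /= => /andP[hx _].
    by apply: (lt_le_trans _ hx); apply: (lt_trans _ h2).
  have cont : {within [set` `[2^-1, s]%R], continuous phi}.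
    apply: derivable_within_continuous => x hx.
    by case: (dphi x (gt1 x hx)).
  have [z hz eq] := MVT_segment hs (fun x hx => dphi x (gt1 x (subset_itv_oo_cc hx))) cont.
  move: hz; rewrite in_itv /= => /andP[z1 z2].
  have phih : phi (2^-1) = 0.
    by rewrite phiE f0 subrr expr0n /= mulr0 subr0.
  move: eq; rewrite phih subr0 phiE => eq.
  have dz : df z - c * (L.+1%:R * (z + - 2^-1) ^+ L) <= 0.
    rewrite mulrA mulVf // mul1r subr_le0.
    apply: (le_trans (ler_norm _)); apply: (le_trans (Hb z _)).
      apply/andP; split; first by apply: (le_trans (ltW h2)).
      exact: (le_trans z2).
    by rewrite ger0_norm // subr_ge0.
  have : f s - c * (s + - 2^-1) ^+ L.+1 <= 0.
    rewrite eq; apply: mulr_le0_ge0 => //; by rewrite subr_ge0.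
  rewrite subr_le0 => H; apply: (le_trans H).
  by rewrite /c mulrC.
- pose c : R := (-1) ^+ L.+1 * L.+1%:R^-1.
  pose phi : R -> R := f - (fun u => c * (u + - 2^-1) ^+ L.+1).
  have phiE : forall u, phi u = f u - c * (u - 2^-1) ^+ L.+1 by [].
  have dphi : forall x : R, -1 < x ->
      is_derive x 1 phi (df x - c * (L.+1%:R * (x + - 2^-1) ^+ L)).
    move=> x hx; exact: is_deriveB (Hd x hx) (isd_cpow x _ c L.+1).
  have gt1 : forall x : R, x \in `[s, 2^-1] -> -1 < x.
    move=> x; rewrite in_itv /= => /andP[hx _].
    by apply: (lt_le_trans _ hx); apply: (lt_le_trans _ s0).
  have cont : {within [set` `[s, 2^-1]%R], continuous phi}.
    apply: derivable_within_continuous => x hx.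
    by case: (dphi x (gt1 x hx)).
  have [z hz eq] := MVT_segment (ltW hs) (fun x hx => dphi x (gt1 x (subset_itv_oo_cc hx))) cont.
  move: hz; rewrite in_itv /= => /andP[z1 z2].
  have phih : phi (2^-1) = 0.
    by rewrite phiE f0 subrr expr0n /= mulr0 subr0.
  move: eq; rewrite phih sub0r phiE => eq.
  have dz : 0 <= df z - c * (L.+1%:R * (z + - 2^-1) ^+ L).
    have key : c * (L.+1%:R * (z - 2^-1) ^+ L) = - `|z - 2^-1| ^+ L.
      rewrite /c ler0_norm ?subr_le0 // [X in _ = - X]exprNn exprS.
      move: Ln; set N := (L.+1%:R : R); set T := (z - 2^-1) ^+ L => Ln.
      by field.
    rewrite key.
    have zin : 0 <= z <= 1.
      apply/andP; split; first exact: (le_trans s0).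
      lra.
    have := Hb z zin; rewrite ler_norml => /andP[h1 _].
    lra.
  have : 0 <= - (f s - c * (s + - 2^-1) ^+ L.+1).
    rewrite eq; apply: mulr_ge0 => //; rewrite subr_ge0; exact: ltW.
  rewrite oppr_ge0 subr_le0 => H; apply: (le_trans H).
  rewrite /c -[2^-1 - s]opprB [(- (s - _)) ^+ _]exprNn le_eqVlt; apply/orP; left; apply/eqP.
  move: Ln; set N := (L.+1%:R : R) => Ln.
  by field.
Qed.

Definition de (L : nat) (x : R) : R := (- (x - 2^-1)) ^+ L / (a0 ^+ L * (1 + x)).

Lemma de_bound (L : nat) (x : R) : 0 <= x <= 1 -> `|de L x| <= `|x - 2^-1| ^+ L.
Proof.
move=> /andP[x0 x1].
have hp : 1 <= 1 + x by rewrite lerDl.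
have A1 : 1 <= a0 ^+ L by rewrite exprn_ege1 // a0_ge1.
have D1 : 1 <= a0 ^+ L * (1 + x).
  by have := ler_pM ler01 ler01 A1 hp; rewrite mulr1.
have D0 : 0 < a0 ^+ L * (1 + x) by apply: (lt_le_trans _ D1).
rewrite /de normrM normrV ?unitfE ?gt_eqF // (gtr0_norm D0) normrX normrN.
rewrite ler_pdivrMr //; apply: ler_peMr => //; exact: exprn_ge0.
Qed.

Lemma e_half (L : nat) : e L (2^-1) = 0.
Proof.
rewrite /e /hhat big_ord_recl subrr expr0 mulr1 hcoef0.
rewrite big1 ?addr0 ?subrr // => i _; by rewrite expr0n /= mulr0.
Qed.

Lemma e_bound (L : nat) (s : R) : 0 <= s <= 1 ->
  `|e L s| <= (2^-1) ^+ L.+1 / L.+1%:R.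
Proof.
move=> hs.
have Hd : forall x : R, -1 < x -> is_derive x 1 (e L) (de L x) by move=> x hx; exact: isd_e.
have B1 := bound_gen Hd (@de_bound L) (e_half L) hs.
have Hd' : forall x : R, -1 < x -> is_derive x 1 (- e L) (- de L x).
  by move=> x hx; apply: is_deriveN; exact: isd_e.
have Hb' : forall x : R, 0 <= x <= 1 -> `|- de L x| <= `|x - 2^-1| ^+ L.
  by move=> x hx; rewrite normrN; exact: de_bound.
have B2 := bound_gen Hd' Hb' _ hs.
have h0 : (- e L) (2^-1) = 0 by rewrite opprfctE /= e_half oppr0.
have {B2} B2 := B2 h0; rewrite opprfctE /= in B2.
have T : `|s - 2^-1| ^+ L.+1 / L.+1%:R <= (2^-1) ^+ L.+1 / L.+1%:R.
  rewrite ler_pM2r ?invr_gt0 ?ltr0n //.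
  apply: lerXn2r.
  - by rewrite nnegrE normr_ge0.
  - by rewrite nnegrE; apply: ltW; exact: half_gt0.
  move: hs => /andP[s0 s1]; rewrite ler_norml; apply/andP; split; lra.
rewrite ler_norml; apply/andP; split.
  rewrite lerNl; exact: (le_trans B2 T).
exact: (le_trans B1 T).
Qed.
End Calc.

Section Main.
Variable R : realType.
Variables (n J : nat) (blk : 'I_n -> 'I_J) (r : 'I_n -> R).

Lemma GzE (z : 'rV[R]_n) : Gz blk r z = E (fun k => z 0 k) (fz blk r).
Proof. by []. Qed.

Lemma grad_eq (y : 'rV[R]_n) (i : 'I_n) :
  gradGz blk r y i = E (upd (fun k => y 0 k) i 1) (fz blk r) - E (upd (fun k => y 0 k) i 0) (fz blk r).
Proof.
rewrite /gradGz /derive; apply: lim_near_cst; first exact: norm_hausdorff.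
near=> t.
have tn : t != 0 by near: t; exact: nbhs_dnbhs_neq.
rewrite /= !GzE.
rewrite (E_split _ i) [E (fun k => y 0 k) _](E_split _ i).
have -> : upd (fun k => (t *: delta_mx 0 i + y) 0 k) i 1 = upd (fun k => y 0 k) i 1.
  apply/funext => k; rewrite /upd; case: eqP => // /eqP ki.
  by rewrite !mxE (negbTE ki) andbF mulr0 add0r.
have -> : upd (fun k => (t *: delta_mx 0 i + y) 0 k) i 0 = upd (fun k => y 0 k) i 0.
  apply/funext => k; rewrite /upd; case: eqP => // /eqP ki.
  by rewrite !mxE (negbTE ki) andbF mulr0 add0r.
rewrite !mxE !eqxx /= mulr1.
rewrite /GRing.scale /=.
set A := E _ _; set B := E _ _.
by field.
Unshelve. all: end_near.
Qed.

Lemma E_ext (y : 'I_n -> R) (F G : {ffun 'I_n -> bool} -> R) :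
  (forall x, F x = G x) -> E y F = E y G.
Proof. by move=> FG; rewrite /E; apply: eq_bigr => x _; rewrite FG. Qed.

Lemma E_sub (y : 'I_n -> R) (F G : {ffun 'I_n -> bool} -> R) :
  E y F - E y G = E y (fun x => F x - G x).
Proof. by rewrite /E -sumrB; apply: eq_bigr => x _; rewrite mulrBr. Qed.

Lemma gradhat_eq (L : nat) (y : 'rV[R]_n) (i : 'I_n) :
  gradGz_hat blk r L y i =
    E (upd (fun k => y 0 k) i 1) (fun x => \sum_(j < J) hhat L (S blk r j x))
  - E (upd (fun k => y 0 k) i 0) (fun x => \sum_(j < J) hhat L (S blk r j x)).
Proof.
rewrite /gradGz_hat !meval_ml.
by congr (_ - _); apply: E_ext => x; rewrite fhat_eval.
Qed.

Definition flip (i : 'I_n) (x : {ffun 'I_n -> bool}) : {ffun 'I_n -> bool} :=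
  [ffun k => if k == i then ~~ x k else x k].

Lemma flipK i : involutive (flip i).
Proof.
move=> x; apply/ffunP => k; rewrite !ffunE.
by case: eqP => // ->; rewrite negbK.
Qed.

Lemma W_flip (y : 'I_n -> R) i x : W (upd y i 0) (flip i x) = W (upd y i 1) x.
Proof.
rewrite /W; apply: eq_bigr => k _; rewrite /upd ffunE.
case: eqP => // ->; by case: (x i); rewrite /= ?subrr ?subr0.
Qed.

Lemma W_ge0 (y : 'I_n -> R) x : (forall k, 0 <= y k <= 1) -> 0 <= W y x.
Proof.
move=> hy; rewrite /W; apply: prodr_ge0 => k _.
by case: (x k); case/andP: (hy k) => // _; rewrite subr_ge0.
Qed.

Lemma W_sum (y : 'I_n -> R) : \sum_x W y x = 1.
Proof.
have := E_mono y (fun _ => 0%N).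
under eq_bigr do rewrite big1 ?mulr1 //.
by move=> ->; rewrite big1.
Qed.

Lemma upd_range (y : 'I_n -> R) i (b : R) : (forall k, 0 <= y k <= 1) -> 0 <= b <= 1 ->
  forall k, 0 <= upd y i b k <= 1.
Proof. by move=> hy hb k; rewrite /upd; case: eqP. Qed.

Lemma E_diff (y : 'I_n -> R) i (F : {ffun 'I_n -> bool} -> R) (B : R) :
  (forall k, 0 <= y k <= 1) -> (forall x, `|F x - F (flip i x)| <= B) ->
  `|E (upd y i 1) F - E (upd y i 0) F| <= B.
Proof.
move=> hy hB.
have h01 : 0 <= (1:R) <= 1 by rewrite ler01 lexx.
have h1 := upd_range i hy h01.
have -> : E (upd y i 0) F = \sum_x W (upd y i 1) x * F (flip i x).
  rewrite /E (reindex_inj (can_inj (flipK i))) /=.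
  by apply: eq_bigr => x _; rewrite W_flip.
rewrite /E -sumrB.
apply: (le_trans (ler_norm_sum _ _ _)).
apply: (@le_trans _ _ (\sum_x W (upd y i 1) x * B)).
  apply: ler_sum => x _; rewrite -mulrBr normrM ger0_norm ?W_ge0 //.
  by apply: ler_wpM2l; [exact: W_ge0|].
by rewrite -mulr_suml W_sum mul1r.
Qed.

Lemma S_range (j : 'I_J) x : (forall i, 0 <= r i <= 1) -> \sum_(i < n) r i = 1 ->
  0 <= S blk r j x <= 1.
Proof.
move=> hr hs; rewrite /S; apply/andP; split.
  apply: sumr_ge0 => i _; apply: mulr_ge0; first by case/andP: (hr i).
  exact: ler0n.
rewrite -[X in _ <= X]hs big_mkcond /=; apply: ler_sum => i _.
have [r0 r1] := andP (hr i).
case: (blk i == j) => //.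
case: (x i); by rewrite ?mulr1 ?mulr0.
Qed.

Lemma S_flip (i : 'I_n) (j : 'I_J) x : blk i != j -> S blk r j (flip i x) = S blk r j x.
Proof.
move=> bij; rewrite /S; apply: eq_bigr => k /eqP bk; rewrite ffunE.
by case: eqP => // ki; move: bij; rewrite -ki bk eqxx.
Qed.

Definition Fe (L : nat) (x : {ffun 'I_n -> bool}) : R := \sum_(j < J) e L (S blk r j x).

Lemma Fe_flip (L : nat) i x : (forall i, 0 <= r i <= 1) -> \sum_(i < n) r i = 1 ->
  `|Fe L x - Fe L (flip i x)| <= ((L.+1)%:R * 2 ^+ L)^-1.
Proof.
move=> hr hs; rewrite /Fe -sumrB (bigD1 (blk i)) //= big1 ?addr0; last first.
  by move=> j bj; rewrite eq_sym in bj; rewrite S_flip // subrr.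
apply: (le_trans (ler_normB _ _)).
have b1 := e_bound L (S_range (blk i) x hr hs).
have b2 := e_bound L (S_range (blk i) (flip i x) hr hs).
apply: (le_trans (lerD b1 b2)).
rewrite exprS exprVn.
have L0 : ((L.+1)%:R : R) != 0 by rewrite pnatr_eq0.
have T0 : (2 ^+ L : R) != 0 by rewrite expf_neq0.
rewrite le_eqVlt; apply/orP; left; apply/eqP.
move: L0 T0; set N := ((L.+1)%:R : R); set T := (2 ^+ L : R) => L0 T0.
field. by rewrite T0 nat1r pnatr_eq0.
Qed.
End Main.

Theorem theorem3 (R : realType) (n J : nat) (blk : 'I_n -> 'I_J) (r : 'I_n -> R)
  (hr : forall i, 0 <= r i <= 1) (hsum : \sum_(i < n) r i = 1)
  (L : nat) (y : 'rV[R]_n) (hy : forall i, 0 <= y 0 i <= 1) :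
  Num.sqrt (\sum_(i < n) (gradGz blk r y i - gradGz_hat blk r L y i) ^+ 2)
    <= Num.sqrt (n%:R) / ((L.+1)%:R * 2 ^+ L).
Proof.
set c := ((L.+1)%:R * 2 ^+ L : R)^-1.
have hd : forall i, `|gradGz blk r y i - gradGz_hat blk r L y i| <= c.
  move=> i; rewrite grad_eq gradhat_eq.
  have -> : forall a b c d : R, (a - b) - (c - d) = (a - c) - (b - d) by move=> *; ring.
  rewrite !E_sub.
  have Hb : forall b, E (upd (fun k => y 0 k) i b) (fun x => fz blk r x - \sum_(j < J) hhat L (S blk r j x))
       = E (upd (fun k => y 0 k) i b) (Fe blk r L).
    move=> b; apply: E_ext => x; rewrite /Fe /fz -sumrB; apply: eq_bigr => j _; by [].
  rewrite !Hb.
  apply: (E_diff (y := fun k => y 0 k)) => //; move=> x; exact: Fe_flip.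
have c0 : 0 <= c by rewrite invr_ge0 mulr_ge0 // ?ler0n // exprn_ge0.
apply: (@le_trans _ _ (Num.sqrt (\sum_(i < n) c ^+ 2))).
  rewrite ler_sqrt; last by rewrite sumr_ge0 // => i _; rewrite sqr_ge0.
  apply: ler_sum => i _; rewrite -real_normK ?num_real //.
  apply: lerXn2r; rewrite ?nnegrE ?normr_ge0 //.
rewrite sumr_const card_ord -[c ^+ 2 *+ n]mulr_natl sqrtrM ?ler0n // sqrtr_sqr ger0_norm //.
Qed.
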